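(* Let $E$ be a locally complete lcHs over $\mathbb{K}$, let $G\subset E'$ be a separating linear subspace, and let $\mathcal{F}(\Omega)$ and $\mathcal{F}(\Omega,E)$ be $\varepsilon$-into-compatible. Let $(T^{E},T^{\mathbb{K}})$ be a consistent and strong family for $(\mathcal{F},E)$, $\nu\colon\omega\to(0,\infty)$ a weight, and suppose $\mathcal{F}\nu(\Omega)$ is a Banach space whose closed unit ball $B_{\mathcal{F}\nu}$ is a compact subset of $\mathcal{F}(\Omega)$. Let $U\subset\omega$ fix the topology in $\mathcal{F}\nu(\Omega)$. Then for every $f\in\mathcal{F}\nu_{G}(U,E)$ such that $\{f(x)\nu(x): x\in U\}$ is bounded in $E$ there exists $F\in\mathcal{F}_{\varepsilon}\nu(\Omega,E)$ with $T^{E}(F)(x)=f(x)$ for all $x\in U$; i.e. the restriction map $R_{U,G}\colon\mathcal{F}_\varepsilon\nu(\Omega,E)\to\mathcal{F}\nu_G(U,E)_{lb}$, $F\mapsto(T^E(F)(x))_{x\in U}$, is surjective.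
   Context: $\mathbb{K}\in\{\mathbb{R},\mathbb{C}\}$; ''lcHs'' means locally convex Hausdorff space over $\mathbb{K}$; $E$ carries a directed fundamental system of seminorms $(p_\alpha)_{\alpha\in\mathfrak{A}}$ and $E'$ is its dual. $E$ is locally complete if for every closed bounded absolutely convex $D\subset E$ the space $\bigcup_n nD$ normed by the gauge of $D$ is a Banach space. A subspace $G\subset E'$ is separating if $e'(x)=0$ for all $e'\in G$ implies $x=0$. Framework: Let $\Omega,\omega$ be non-empty sets. For an lcHs $F$, $F'_\kappa$ is $F'$ with the topology of uniform convergence on absolutely convex compact subsets of $F$, and $F\varepsilon E:=L_e(F'_\kappa,E)$ is the space of continuous linear maps $F'_\kappa\to E$ with the topology of uniform convergence on equicontinuous subsets of $F'$. Let $\mathcal{F}(\Omega)\subset\mathbb{K}^\Omega$ and $\mathcal{F}(\Omega,E)\subset E^\Omega$ be linear subspaces carrying locally convex Hausdorff topologies with $\delta_x\in\mathcal{F}(\Omega)'$ for all $x\in\Omega$. Define $S\colon\mathcal{F}(\Omega)\varepsilon E\to E^\Omega$, $S(u)(x):=u(\delta_x)$. The spaces are $\varepsilon$-into-compatible if $S$ maps into $\mathcal{F}(\Omega,E)$ and is a linear topological isomorphism onto its range. Let $T^{\mathbb{K}}\colon\mathcal{F}(\Omega)\to\mathbb{K}^\omega$ and $T^{E}\colon\mathcal{F}(\Omega,E)\to E^\omega$ be linear and $T^{\mathbb{K}}_x:=\delta_x\circ T^{\mathbb{K}}$. $(T^E,T^{\mathbb{K}})$ is consistent for $(\mathcal{F},E)$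 if for every $u\in\mathcal{F}(\Omega)\varepsilon E$ we have $S(u)\in\mathcal{F}(\Omega,E)$ and for all $x\in\omega$: $T^{\mathbb{K}}_x\in\mathcal{F}(\Omega)'$ and $T^{E}(S(u))(x)=u(T^{\mathbb{K}}_x)$. It is strong for $(\mathcal{F},E)$ if for all $e'\in E'$, $f\in\mathcal{F}(\Omega,E)$: $e'\circ f\in\mathcal{F}(\Omega)$ and $T^{\mathbb{K}}(e'\circ f)(x)=e'(T^E(f)(x))$ for all $x\in\omega$. For a weight $\nu\colon\omega\to(0,\infty)$ set $\mathcal{F}\nu(\Omega,E):=\{f\in\mathcal{F}(\Omega,E): |f|_\alpha:=\sup_{x\in\omega}p_\alpha(T^E(f)(x))\nu(x)<\infty\ \forall\alpha\}$ with the topology of these seminorms, and $\mathcal{F}\nu(\Omega):=\{f\in\mathcal{F}(\Omega): |f|_{\mathcal{F}\nu}:=\sup_{x\in\omega}|T^{\mathbb{K}}(f)(x)|\nu(x)<\infty\}$. Let $B_{\mathcal{F}\nu}$ be the closed unit ball of $\mathcal{F}\nu(\Omega)$, $B^{\circ\mathcal{F}'}_{\mathcal{F}\nu}:=\{y'\in\mathcal{F}(\Omega)':|y'(f)|\le1\ \forall f\in B_{\mathcal{F}\nu}\}$ and $\mathcal{F}_\varepsilon\nu(\Omega,E):=S(\{u\in\mathcal{F}(\Omega)\varepsilon E: u(B^{\circ\mathcal{F}'}_{\mathcal{F}\nu})\text{ is bounded in }E\})$. A set $U\subset\omega$ fixes the topology in $\mathcal{F}\nu(\Omega)$ if there is $C>0$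 with $|f|_{\mathcal{F}\nu}\le C\sup_{x\in U}|T^{\mathbb{K}}(f)(x)|\nu(x)$ for all $f\in\mathcal{F}\nu(\Omega)$. $\mathcal{F}\nu_G(U,E)$ is the space of functions $f\colon U\to E$ such that for every $e'\in G$ there is $f_{e'}\in\mathcal{F}\nu(\Omega)$ with $T^{\mathbb{K}}(f_{e'})(x)=e'(f(x))$ for all $x\in U$; $\mathcal{F}\nu_G(U,E)_{lb}$ is the subspace of those $f$ for which $\{f(x)\nu(x):x\in U\}$ is bounded in $E$. *)

(* Defs.v *)
From Stdlib Require Import Reals List.
Open Scope R_scope.

Record Scalars := {
  Kt : Type; K0 : Kt; K1 : Kt;
  Kadd : Kt -> Kt -> Kt; Kmul : Kt -> Kt -> Kt; Kopp : Kt -> Kt;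
  Kabs : Kt -> R; KofR : R -> Kt }.

Definition R_scalars : Scalars :=
  {| Kt := R; K0 := 0; K1 := 1; Kadd := Rplus; Kmul := Rmult; Kopp := Ropp;
     Kabs := Rabs; KofR := fun r => r |}.

Definition Cpx : Type := (R * R)%type.
Definition C_scalars : Scalars :=
  {| Kt := Cpx; K0 := (0, 0); K1 := (1, 0);
     Kadd := fun z w => (fst z + fst w, snd z + snd w);
     Kmul := fun z w => (fst z * fst w - snd z * snd w, fst z * snd w + snd z * fst w);
     Kopp := fun z => (- fst z, - snd z);
     Kabs := fun z => sqrt (fst z * fst z + snd z * snd z);
     KofR := fun r => (r, 0) |}.

Inductive KField := KR | KC.
Definition scal (k : KField) : Scalars :=
  match k with KR => R_scalars | KC => C_scalars end.

Record LCHS (K : Scalars) := {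
  car :> Type;
  vzero : car; vadd : car -> car -> car; vopp : car -> car;
  vscale : Kt K -> car -> car;
  vadd_assoc : forall x y z, vadd x (vadd y z) = vadd (vadd x y) z;
  vadd_comm : forall x y, vadd x y = vadd y x;
  vadd_0 : forall x, vadd x vzero = x;
  vadd_opp : forall x, vadd x (vopp x) = vzero;
  vscale_1 : forall x, vscale (K1 K) x = x;
  vscale_assoc : forall a b x, vscale a (vscale b x) = vscale (Kmul K a b) x;
  vscale_distr_v : forall a x y, vscale a (vadd x y) = vadd (vscale a x) (vscale a y);
  vscale_distr_s : forall a b x, vscale (Kadd K a b) x = vadd (vscale a x) (vscale b x);
  sidx : Type;
  sidx_inh : inhabited sidx;
  sn : sidx -> car -> R;
  sn_nonneg : forall a x, 0 <= sn a x;
  sn_tri : forall a x y, sn a (vadd x y) <= sn a x + sn a y;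
  sn_hom : forall a c x, sn a (vscale c x) = Kabs K c * sn a x;
  sn_directed : forall a b, exists c C, forall x, sn a x <= C * sn c x /\ sn b x <= C * sn c x;
  sn_hausdorff : forall x, (forall a, sn a x = 0) -> x = vzero }.

Arguments car {K}. Arguments vzero {K}. Arguments vadd {K}. Arguments vopp {K}.
Arguments vscale {K}. Arguments sidx {K}. Arguments sn {K}.

Section LCS.
Context {K : Scalars} (E : LCHS K).

Definition vsub (x y : E) : E := vadd E x (vopp E y).

Definition is_dual (e : E -> Kt K) : Prop :=
  (forall x y, e (vadd E x y) = Kadd K (e x) (e y)) /\
  (forall c x, e (vscale E c x) = Kmul K c (e x)) /\
  exists a C, forall x, Kabs K (e x) <= C * sn E a x.

Definition bounded (B : E -> Prop) : Prop :=
  forall a, exists C, forall x, B x -> sn E a x <= C.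

Definition abs_convex (D : E -> Prop) : Prop :=
  forall x y c d, D x -> D y -> Kabs K c + Kabs K d <= 1 ->
    D (vadd E (vscale E c x) (vscale E d y)).

Definition is_open (O : E -> Prop) : Prop :=
  forall x, O x -> exists a eps, 0 < eps /\ forall y, sn E a (vsub y x) < eps -> O y.

Definition is_closed (D : E -> Prop) : Prop := is_open (fun x => ~ D x).

Definition mulset (D : E -> Prop) (t : R) (x : E) : Prop :=
  exists d, D d /\ x = vscale E (KofR K t) d.

Definition span_set (D : E -> Prop) (x : E) : Prop :=
  exists n : nat, mulset D (INR n) x.

(* For every closed bounded absolutely convex D, (span D, gauge of D) is a
   Banach space: Cauchy sequences w.r.t. the gauge converge w.r.t. the gauge.
   ("gauge(y) <= eps" is expressed as "y in eps D".) *)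
Definition locally_complete : Prop :=
  forall D : E -> Prop, is_closed D -> bounded D -> abs_convex D ->
  forall xs : nat -> E, (forall n, span_set D (xs n)) ->
  (forall eps, 0 < eps -> exists N, forall n m, (N <= n)%nat -> (N <= m)%nat ->
        mulset D eps (vsub (xs n) (xs m))) ->
  exists x, span_set D x /\
    forall eps, 0 < eps -> exists N, forall n, (N <= n)%nat -> mulset D eps (vsub (xs n) x).

Definition separating_subspace (G : (E -> Kt K) -> Prop) : Prop :=
  (forall e, G e -> is_dual e) /\
  G (fun _ => K0 K) /\
  (forall e1 e2, G e1 -> G e2 -> G (fun x => Kadd K (e1 x) (e2 x))) /\
  (forall c e, G e -> G (fun x => Kmul K c (e x))) /\
  (forall x, (forall e, G e -> e x = K0 K) -> x = vzero E).
End LCS.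

Record FSpace (K : Scalars) (V : Type) (vz : V) (va : V -> V -> V)
       (vs : Kt K -> V -> V) (Om : Type) := {
  mem : (Om -> V) -> Prop;
  mem0 : mem (fun _ => vz);
  mem_add : forall f g, mem f -> mem g -> mem (fun x => va (f x) (g x));
  mem_scale : forall c f, mem f -> mem (fun x => vs c (f x));
  fidx : Type;
  fidx_inh : inhabited fidx;
  fsn : fidx -> (Om -> V) -> R;
  fsn_nonneg : forall j f, mem f -> 0 <= fsn j f;
  fsn_tri : forall j f g, mem f -> mem g -> fsn j (fun x => va (f x) (g x)) <= fsn j f + fsn j g;
  fsn_hom : forall j c f, mem f -> fsn j (fun x => vs c (f x)) = Kabs K c * fsn j f;
  fsn_directed : forall j k, exists l C, forall f, mem f ->
      fsn j f <= C * fsn l f /\ fsn k f <= C * fsn l f;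
  fsn_hausdorff : forall f, mem f -> (forall j, fsn j f = 0) -> forall x, f x = vz }.

Arguments mem {K V vz va vs Om}. Arguments fidx {K V vz va vs Om}.
Arguments fsn {K V vz va vs Om}.

Definition FScal (K : Scalars) (Om : Type) : Type :=
  FSpace K (Kt K) (K0 K) (Kadd K) (Kmul K) Om.
Definition FVec {K : Scalars} (E : LCHS K) (Om : Type) : Type :=
  FSpace K (car E) (vzero E) (vadd E) (vscale E) Om.

Section Eps.
Context {K : Scalars} {Om : Type} (F : FScal K Om).

Definition fsub (f g : Om -> Kt K) : Om -> Kt K := fun x => Kadd K (f x) (Kopp K (g x)).

Definition fdual (y : (Om -> Kt K) -> Kt K) : Prop :=
  (forall f g, mem F f -> mem F g -> y (fun x => Kadd K (f x) (g x)) = Kadd K (y f) (y g)) /\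
  (forall c f, mem F f -> y (fun x => Kmul K c (f x)) = Kmul K c (y f)) /\
  exists j C, forall f, mem F f -> Kabs K (y f) <= C * fsn F j f.

Definition fopen (O : (Om -> Kt K) -> Prop) : Prop :=
  forall f, mem F f -> O f -> exists j eps, 0 < eps /\
    forall g, mem F g -> fsn F j (fsub g f) < eps -> O g.

Definition fcompact (S : (Om -> Kt K) -> Prop) : Prop :=
  (forall f, S f -> mem F f) /\
  forall (I : Type) (O : I -> (Om -> Kt K) -> Prop),
    (forall i, fopen (O i)) -> (forall f, S f -> exists i, O i f) ->
    exists l : list I, forall f, S f -> exists i, In i l /\ O i f.

Definition fabs_convex (S : (Om -> Kt K) -> Prop) : Prop :=
  forall f g c d, S f -> S g -> Kabs K c + Kabs K d <= 1 ->
    S (fun x => Kadd K (Kmul K c (f x)) (Kmul K d (g x))).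

Definition equicont (H : ((Om -> Kt K) -> Kt K) -> Prop) : Prop :=
  (forall y, H y -> fdual y) /\
  exists j C, forall y, H y -> forall f, mem F f -> Kabs K (y f) <= C * fsn F j f.

Context (E : LCHS K).

(* u is an element of F(Omega) eps E = L(F(Omega)'_kappa, E) *)
Definition is_eps (u : ((Om -> Kt K) -> Kt K) -> car E) : Prop :=
  (* well defined on F(Omega)' (functionals are identified on F(Omega)) *)
  (forall y1 y2, fdual y1 -> fdual y2 -> (forall f, mem F f -> y1 f = y2 f) -> u y1 = u y2) /\
  (forall y1 y2, fdual y1 -> fdual y2 ->
     u (fun f => Kadd K (y1 f) (y2 f)) = vadd E (u y1) (u y2)) /\
  (forall c y, fdual y -> u (fun f => Kmul K c (y f)) = vscale E c (u y)) /\
  (* continuous w.r.t. uniform convergence on absolutely convex compact sets *)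
  (forall a, exists (Kc : (Om -> Kt K) -> Prop) C, fcompact Kc /\ fabs_convex Kc /\
     forall y, fdual y -> forall c, (forall f, Kc f -> Kabs K (y f) <= c) ->
       sn E a (u y) <= C * c).

Definition Smap (u : ((Om -> Kt K) -> Kt K) -> car E) : Om -> car E :=
  fun x => u (fun f => f x).

Definition eps_into_compatible (FE : FVec E Om) : Prop :=
  (forall u, is_eps u -> mem FE (Smap u)) /\
  (forall u1 u2, is_eps u1 -> is_eps u2 -> Smap u1 = Smap u2 ->
     forall y, fdual y -> u1 y = u2 y) /\
  (forall j : fidx FE, exists H a C, equicont H /\
     forall u, is_eps u -> forall c, (forall y, H y -> sn E a (u y) <= c) ->
       fsn FE j (Smap u) <= C * c) /\
  (forall H a, equicont H -> exists (j : fidx FE) C,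
     forall u, is_eps u -> forall y, H y -> sn E a (u y) <= C * fsn FE j (Smap u)).

Context {w : Type} (FE : FVec E Om)
        (TK : (Om -> Kt K) -> (w -> Kt K)) (TE : (Om -> car E) -> (w -> car E)).

Definition TK_linear : Prop :=
  (forall f g, mem F f -> mem F g ->
     TK (fun z => Kadd K (f z) (g z)) = (fun x => Kadd K (TK f x) (TK g x))) /\
  (forall c f, mem F f -> TK (fun z => Kmul K c (f z)) = (fun x => Kmul K c (TK f x))).

Definition TE_linear : Prop :=
  (forall f g, mem FE f -> mem FE g ->
     TE (fun z => vadd E (f z) (g z)) = (fun x => vadd E (TE f x) (TE g x))) /\
  (forall c f, mem FE f -> TE (fun z => vscale E c (f z)) = (fun x => vscale E c (TE f x))).

Definition consistent : Prop :=
  forall u, is_eps u -> mem FE (Smap u) /\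
    forall x, fdual (fun f => TK f x) /\ TE (Smap u) x = u (fun f => TK f x).

Definition strong : Prop :=
  forall e, is_dual E e -> forall f, mem FE f ->
    mem F (fun z => e (f z)) /\ forall x, TK (fun z => e (f z)) x = e (TE f x).

Context (nu : w -> R).

Definition inFnu (f : Om -> Kt K) : Prop :=
  mem F f /\ exists C, forall x, Kabs K (TK f x) * nu x <= C.

Definition nu_le (f : Om -> Kt K) (c : R) : Prop :=
  forall x, Kabs K (TK f x) * nu x <= c.

Definition Fnu_Banach : Prop :=
  (forall f, inFnu f -> nu_le f 0 -> forall z, f z = K0 K) /\
  forall fs : nat -> Om -> Kt K, (forall n, inFnu (fs n)) ->
    (forall eps, 0 < eps -> exists N, forall n m, (N <= n)%nat -> (N <= m)%nat ->
        nu_le (fsub (fs n) (fs m)) eps) ->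
    exists f, inFnu f /\
      forall eps, 0 < eps -> exists N, forall n, (N <= n)%nat -> nu_le (fsub (fs n) f) eps.

Definition Bnu (f : Om -> Kt K) : Prop := inFnu f /\ nu_le f 1.

Definition Bpolar (y : (Om -> Kt K) -> Kt K) : Prop :=
  fdual y /\ forall f, Bnu f -> Kabs K (y f) <= 1.

Definition Feps_nu (Fn : Om -> car E) : Prop :=
  exists u, is_eps u /\ bounded E (fun e => exists y, Bpolar y /\ e = u y) /\ Fn = Smap u.

Definition fixes_topology (U : w -> Prop) : Prop :=
  exists C, 0 < C /\ forall f, inFnu f -> forall c, 0 <= c ->
    (forall x, U x -> Kabs K (TK f x) * nu x <= c) -> nu_le f (C * c).

(* f in F nu_G(U, E) (functions on U represented as functions on w,
   only their values on U matter) *)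
Definition FnuG (G : (car E -> Kt K) -> Prop) (U : w -> Prop) (f : w -> car E) : Prop :=
  forall e, G e -> exists fe, inFnu fe /\ forall x, U x -> TK fe x = e (f x).

Definition lb (U : w -> Prop) (f : w -> car E) : Prop :=
  bounded E (fun v => exists x, U x /\ v = vscale E (KofR K (nu x)) (f x)).
End Eps.

(* Main.v *)
Require Import Defs.
From Stdlib Require Import Reals Lra Lia Psatz List Classical ClassicalEpsilon FunctionalExtensionality.
Open Scope R_scope.


Section Scal.
Variable k : KField.
Notation KK := (scal k).
Notation Kt := (Kt KK).
Notation kadd := (Kadd KK).
Notation kmul := (Kmul KK).
Notation kopp := (Kopp KK).
Notation kabs := (Kabs KK).
Notation kofR := (KofR KK).
Notation k0 := (K0 KK).
Notation k1 := (K1 KK).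

Lemma Kring : ring_theory k0 k1 kadd kmul (fun a b => kadd a (kopp b)) kopp (@eq Kt).
Proof.
  destruct k; constructor; simpl; intros;
  try (apply injective_projections; simpl); ring.
Qed.
Add Ring KR : Kring.

Definition Kre (z : Kt) : R :=
  match k return Defs.Kt (scal k) -> R with KR => fun z => z | KC => fun z => fst z end z.

Lemma kabs_nonneg z : 0 <= kabs z.
Proof. destruct k; simpl. apply Rabs_pos. apply sqrt_pos. Qed.

Lemma kabs_mul a b : kabs (kmul a b) = kabs a * kabs b.
Proof. destruct k; simpl. apply Rabs_mult.
  rewrite <- sqrt_mult by nra. f_equal. ring. Qed.

Lemma kabs_tri a b : kabs (kadd a b) <= kabs a + kabs b.
Proof. destruct k; simpl. apply Rabs_triang.
  destruct a as [a1 a2], b as [b1 b2]; simpl.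
  set (p := sqrt (a1*a1+a2*a2)). set (q := sqrt (b1*b1+b2*b2)).
  assert (Hp : 0 <= p) by apply sqrt_pos. assert (Hq : 0 <= q) by apply sqrt_pos.
  assert (Hp2 : p*p = a1*a1+a2*a2) by (apply sqrt_sqrt; nra).
  assert (Hq2 : q*q = b1*b1+b2*b2) by (apply sqrt_sqrt; nra).
  rewrite <- (sqrt_square (p+q)) by lra. apply sqrt_le_1_alt.
  clearbody p q.
  assert (a1*b1+a2*b2 <= p*q).
  { assert ((a1*b1+a2*b2)*(a1*b1+a2*b2) <= (p*q)*(p*q)).
    { replace ((p*q)*(p*q)) with ((p*p)*(q*q)) by ring. rewrite Hp2, Hq2. pose proof (Rle_0_sqr (a1*b2-a2*b1)). unfold Rsqr in *. nra. }
    assert (0 <= p*q) by nra. nra. }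
  nra.
Qed.

Lemma kabs_0 : kabs k0 = 0.
Proof. destruct k; simpl. apply Rabs_R0. replace (0*0+0*0) with 0 by ring. apply sqrt_0. Qed.

Lemma kabs_eq0 a : kabs a = 0 -> a = k0.
Proof. destruct k; simpl; intro H. destruct (Rcase_abs a); [rewrite Rabs_left in H|rewrite Rabs_right in H]; lra.
  destruct a as [a1 a2]; simpl in *. apply sqrt_eq_0 in H; [|nra].
  assert (a1 = 0) by nra. assert (a2 = 0) by nra. subst; auto. Qed.

Lemma kabs_ofR r : kabs (kofR r) = Rabs r.
Proof. destruct k; simpl; auto. replace (r*r+0*0) with (Rsqr r) by (unfold Rsqr; ring). apply sqrt_Rsqr_abs. Qed.

Lemma kabs_1 : kabs k1 = 1.
Proof. destruct k; simpl. apply Rabs_R1. replace (1*1+0*0) with 1 by ring. apply sqrt_1. Qed.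

Lemma kofR_add r s : kofR (r + s) = kadd (kofR r) (kofR s).
Proof. destruct k; simpl; auto. apply injective_projections; simpl; ring. Qed.
Lemma kofR_mul r s : kofR (r * s) = kmul (kofR r) (kofR s).
Proof. destruct k; simpl; auto. apply injective_projections; simpl; ring. Qed.
Lemma kofR_1 : kofR 1 = k1.
Proof. unfold Kre; destruct k; simpl; auto. Qed.
Lemma kofR_0 : kofR 0 = k0.
Proof. unfold Kre; destruct k; simpl; auto. Qed.
Lemma kofR_opp r : kofR (- r) = kopp (kofR r).
Proof. destruct k; simpl; auto. apply injective_projections; simpl; ring. Qed.

Lemma kre_add a b : Kre (kadd a b) = Kre a + Kre b.
Proof. unfold Kre; destruct k; simpl; auto. Qed.
Lemma kre_opp a : Kre (kopp a) = - Kre a.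
Proof. unfold Kre; destruct k; simpl; auto. Qed.
Lemma kre_ofR_mul r a : Kre (kmul (kofR r) a) = r * Kre a.
Proof. unfold Kre; destruct k; simpl; auto. ring. Qed.
Lemma kre_ofR r : Kre (kofR r) = r.
Proof. unfold Kre; destruct k; simpl; auto. Qed.
Lemma kre_le a : Kre a <= kabs a.
Proof. unfold Kre; destruct k; simpl. apply Rle_abs. destruct a as [a1 a2]; simpl.
  apply Rle_trans with (Rabs a1). apply Rle_abs.
  rewrite <- sqrt_Rsqr_abs. apply sqrt_le_1_alt. pose proof (Rle_0_sqr a2). unfold Rsqr in *; lra. Qed.
Lemma kabs_opp a : kabs (kopp a) = kabs a.
Proof. destruct k; simpl. apply Rabs_Ropp. f_equal. ring. Qed.

Lemma kre_abs a : Rabs (Kre a) <= kabs a.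
Proof. unfold Rabs. destruct (Rcase_abs (Kre a)). rewrite <- kre_opp.
  rewrite <- (kabs_opp a). apply kre_le. apply kre_le. Qed.

Lemma kre_ge a : - kabs a <= Kre a.
Proof. pose proof (kre_abs a) as H. revert H. unfold Rabs; destruct Rcase_abs; intros; lra. Qed.





Lemma krot a : exists l, kabs l = 1 /\ kmul l a = kofR (kabs a).
Proof. destruct k; simpl.
  - destruct (Rcase_abs a). exists (-1). split; rewrite Rabs_left; lra.
    exists 1. split; [rewrite Rabs_right|rewrite (Rabs_right a)]; lra.
  - destruct a as [a1 a2]; simpl. set (s := sqrt (a1*a1+a2*a2)).
    assert (Hs : 0 <= s) by apply sqrt_pos.
    assert (Hs2 : s*s = a1*a1+a2*a2) by (apply sqrt_sqrt; nra).
    destruct (Req_dec s 0) as [H0|H0].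
    + exists (1,0). simpl. split. replace (1*1+0*0) with 1 by ring. apply sqrt_1.
      assert (a1 = 0) by nra. assert (a2 = 0) by nra. subst. rewrite H0. apply injective_projections; simpl; ring.
    + exists (a1/s, - a2/s). simpl. split.
      * replace (a1 / s * (a1 / s) + - a2 / s * (- a2 / s)) with 1. apply sqrt_1.
        transitivity ((a1*a1+a2*a2)/(s*s)). rewrite <- Hs2. field; auto. field; auto.
      * apply injective_projections; simpl.
        transitivity ((a1*a1+a2*a2)/s). field; auto. rewrite <- Hs2. field; auto.
        field; auto.
Qed.
End Scal.


Lemma Rdiv_le_0_compat (a b : R) : 0 <= a -> 0 < b -> 0 <= a / b.
Proof. intros. unfold Rdiv. apply Rmult_le_pos; auto. left; apply Rinv_0_lt_compat; auto. Qed.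

Lemma Rabs_sub_bd x c M : Rabs x <= M -> 0 <= c -> Rabs (x - c) <= M + c.
Proof. unfold Rabs; repeat destruct Rcase_abs; lra. Qed.

Section Minimax.
Variables (S A : Type) (pc : R -> S -> S -> S).

Definition convX (X : S -> Prop) : Prop :=
  forall t g1 g2, 0 <= t <= 1 -> X g1 -> X g2 -> X (pc t g1 g2).
Definition affX (X : S -> Prop) (h : S -> R) : Prop :=
  forall t g1 g2, 0 <= t <= 1 -> X g1 -> X g2 -> h (pc t g1 g2) = (1 - t) * h g1 + t * h g2.

Lemma two_lemma (X : S -> Prop) (h1 h2 : S -> R) (M d : R) :
  convX X -> affX X h1 -> affX X h2 ->
  (forall g, X g -> Rabs (h1 g) <= M /\ Rabs (h2 g) <= M) -> 0 < d ->
  (forall g, X g -> h1 g > d \/ h2 g > d) ->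
  exists t, 0 <= t <= 1 /\ forall g, X g -> (1 - t) * h1 g + t * h2 g > 0.
Proof.
  intros HC A1 A2 HM Hd Hmax.
  destruct (classic (exists p, X p /\ h1 p <= 0)) as [[p0 [Xp0 Hp0]]|NP].
  2:{ exists 0. split. lra. intros g Xg. assert (h1 g > 0).
      { apply Rnot_le_lt. intro. apply NP. eauto. } lra. }
  destruct (classic (exists q, X q /\ h2 q <= 0)) as [[q0 [Xq0 Hq0]]|NQ].
  2:{ exists 1. split. lra. intros g Xg. assert (h2 g > 0).
      { apply Rnot_le_lt. intro. apply NQ. eauto. } lra. }
  assert (HM0 : 0 < M).
  { destruct (HM p0 Xp0) as [_ H]. destruct (Hmax p0 Xp0); [lra|].
    apply Rlt_le_trans with (Rabs (h2 p0)); [|auto]. rewrite Rabs_right; lra. }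
  set (eta := d * d / (4 * (M * M))).
  assert (Heta : 0 < eta). { unfold eta. apply Rdiv_lt_0_compat; nra. }
  assert (Hgap : forall p q, X p -> h1 p <= 0 -> X q -> h2 q <= 0 ->
            - h1 p / (h2 p - h1 p) + eta <= h1 q / (h1 q - h2 q)).
  { intros p q Xp Hp Xq Hq.
    assert (Hv1 : h2 p > d) by (destruct (Hmax p Xp); lra).
    assert (Hu2 : h1 q > d) by (destruct (Hmax q Xq); lra).
    set (u1 := h1 p) in *. set (v1 := h2 p) in *. set (u2 := h1 q) in *. set (v2 := h2 q) in *.
    assert (Bv1 : v1 <= M) by (destruct (HM p Xp) as [_ H]; unfold v1; eapply Rle_trans; [apply Rle_abs|exact H]).
    assert (Bu1 : - u1 <= M) by (destruct (HM p Xp) as [H _]; unfold u1; eapply Rle_trans; [apply Rle_abs|rewrite Rabs_Ropp; exact H]).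
    assert (Bu2 : u2 <= M) by (destruct (HM q Xq) as [H _]; unfold u2; eapply Rle_trans; [apply Rle_abs|exact H]).
    assert (Bv2 : - v2 <= M) by (destruct (HM q Xq) as [_ H]; unfold v2; eapply Rle_trans; [apply Rle_abs|rewrite Rabs_Ropp; exact H]).
    set (s := - u1 / (u2 - u1)).
    assert (Hs : 0 <= s <= 1).
    { unfold s. split. apply Rdiv_le_0_compat; lra.
      apply Rmult_le_reg_r with (u2 - u1). lra. field_simplify; lra. }
    assert (Xm := HC s p q Hs Xp Xq).
    assert (E1 : h1 (pc s p q) = 0).
    { rewrite A1 by auto. fold u1 u2. unfold s. field. lra. }
    assert (E2 : h2 (pc s p q) = (u2 * v1 - u1 * v2) / (u2 - u1)).
    { rewrite A2 by auto. fold v1 v2. unfold s. field. lra. }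
    assert (Hm := Hmax _ Xm). rewrite E1, E2 in Hm.
    assert (Num : u2 * v1 - u1 * v2 > d * d).
    { destruct Hm as [Hm|Hm]; [lra|].
      apply Rmult_lt_compat_r with (r := u2 - u1) in Hm; [|lra].
      unfold Rdiv in Hm. rewrite Rmult_assoc, Rinv_l in Hm by lra. nra. }
    assert (Hden : 0 < (u2 - v2) * (v1 - u1) <= 4 * (M * M)) by (split; nra).
    assert (Eq : h1 q / (h1 q - h2 q) - - h1 p / (h2 p - h1 p)
                 = (u2 * v1 - u1 * v2) / ((u2 - v2) * (v1 - u1))).
    { fold u1 u2 v1 v2. field. lra. }
    assert (eta <= (u2 * v1 - u1 * v2) / ((u2 - v2) * (v1 - u1))).
    { unfold eta. apply Rle_trans with (d * d / ((u2 - v2) * (v1 - u1))).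
      apply Rmult_le_compat_l. nra. apply Rinv_le_contravar; lra.
      apply Rmult_le_compat_r. left; apply Rinv_0_lt_compat; lra. lra. }
    fold u1 u2 v1 v2 in Eq. lra. }
  set (Tset := fun r => exists p, X p /\ h1 p <= 0 /\ r = - h1 p / (h2 p - h1 p)).
  assert (Tb : bound Tset).
  { exists (h1 q0 / (h1 q0 - h2 q0)). intros r [p [Xp [Hp ->]]]. pose proof (Hgap p q0 Xp Hp Xq0 Hq0). lra. }
  assert (Tne : exists r, Tset r) by (exists (- h1 p0 / (h2 p0 - h1 p0)); exists p0; auto).
  destruct (completeness Tset Tb Tne) as [T [TU TL]].
  assert (Tq : forall q, X q -> h2 q <= 0 -> T + eta <= h1 q / (h1 q - h2 q)).
  { intros q Xq Hq. assert (T <= h1 q / (h1 q - h2 q) - eta); [|lra].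
    apply TL. intros r [p [Xp [Hp ->]]]. pose proof (Hgap p q Xp Hp Xq Hq). lra. }
  assert (Tp : forall p, X p -> h1 p <= 0 -> - h1 p / (h2 p - h1 p) <= T).
  { intros p Xp Hp. apply TU. exists p; auto. }
  exists (T + eta / 2). split.
  { split.
    - pose proof (Tp p0 Xp0 Hp0). assert (0 <= - h1 p0 / (h2 p0 - h1 p0)).
      { destruct (Hmax p0 Xp0); [lra|]. apply Rdiv_le_0_compat; lra. } lra.
    - pose proof (Tq q0 Xq0 Hq0). assert (h1 q0 / (h1 q0 - h2 q0) <= 1).
      { destruct (Hmax q0 Xq0); [|lra]. apply Rmult_le_reg_r with (h1 q0 - h2 q0). lra.
        field_simplify; lra. } lra. }
  intros g Xg.
  destruct (Rle_dec (h1 g) 0) as [H1|H1].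
  { pose proof (Tp g Xg H1). assert (h2 g > d) by (destruct (Hmax g Xg); lra).
    assert (- h1 g / (h2 g - h1 g) < T + eta / 2) by lra.
    apply Rmult_lt_compat_r with (r := h2 g - h1 g) in H2; [|lra].
    unfold Rdiv in H2. rewrite Rmult_assoc, Rinv_l in H2 by lra. nra. }
  destruct (Rle_dec (h2 g) 0) as [H2|H2].
  { pose proof (Tq g Xg H2). assert (h1 g > d) by (destruct (Hmax g Xg); lra).
    assert (T + eta / 2 < h1 g / (h1 g - h2 g)) by lra.
    apply Rmult_lt_compat_r with (r := h1 g - h2 g) in H3; [|lra].
    unfold Rdiv in H3. rewrite Rmult_assoc, Rinv_l in H3 by lra. nra. }
  assert (0 <= T + eta / 2 <= 1).
  { split.
    - pose proof (Tp p0 Xp0 Hp0). assert (0 <= - h1 p0 / (h2 p0 - h1 p0)).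
      { destruct (Hmax p0 Xp0); [lra|]. apply Rdiv_le_0_compat; lra. } lra.
    - pose proof (Tq q0 Xq0 Hq0). assert (h1 q0 / (h1 q0 - h2 q0) <= 1).
      { destruct (Hmax q0 Xq0); [|lra]. apply Rmult_le_reg_r with (h1 q0 - h2 q0). lra.
        field_simplify; lra. } lra. }
  nra.
Qed.

Variables (As : A -> Prop) (cmb : R -> A -> A -> A) (h : A -> S -> R) (M : R) (Xs : S -> Prop) (a0 : A).
Hypothesis a0_in : As a0.
Hypothesis cmb_in : forall t a1 a2, 0 <= t <= 1 -> As a1 -> As a2 -> As (cmb t a1 a2).
Hypothesis h_cmb : forall t a1 a2 g, 0 <= t <= 1 -> As a1 -> As a2 -> Xs g ->
  h (cmb t a1 a2) g = (1 - t) * h a1 g + t * h a2 g.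
Hypothesis h_aff : forall a, As a -> affX Xs (h a).
Hypothesis h_bd : forall a g, As a -> Xs g -> Rabs (h a g) <= M.

Lemma minimax_list (l : list A) :
  forall (X : S -> Prop) d, (forall g, X g -> Xs g) -> convX X -> 0 < d ->
  (forall g, X g -> exists a, In a l /\ As a /\ h a g > d) ->
  exists a, As a /\ exists d', 0 < d' /\ forall g, X g -> h a g > d'.
Proof.
  induction l as [|a l IH]; intros X d HX CX Hd Hcov.
  { exists a0. split; auto. exists 1. split. lra. intros g Xg. destruct (Hcov g Xg) as [? [[] _]]. }
  destruct (classic (As a)) as [Ha|Ha].
  2:{ apply (IH X d); auto. intros g Xg. destruct (Hcov g Xg) as [c [[<-|Hc] Hc2]]. tauto. eauto. }
  set (X' := fun g => X g /\ h a g <= d / 2).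
  destruct (IH X' d) as [b [Hb [d1 [Hd1 Hb1]]]]; auto.
  { intros g [Xg _]; auto. }
  { intros t g1 g2 Ht [X1 H1] [X2 H2]. split. apply CX; auto.
    rewrite (h_aff a Ha) by auto. nra. }
  { intros g [Xg Hg]. destruct (Hcov g Xg) as [c [[<-|Hc] Hc2]]. lra. eauto. }
  set (d2 := Rmin d1 (d / 2)).
  assert (Hd2 : 0 < d2) by (unfold d2; apply Rmin_glb_lt; lra).
  destruct (two_lemma X (fun g => h b g - d2 / 2) (fun g => h a g - d2 / 2) (M + d2 / 2) (d2 / 2))
    as [t [Ht Hall]]; auto.
  { intros t g1 g2 Ht X1 X2. rewrite (h_aff b Hb) by auto. ring. }
  { intros t g1 g2 Ht X1 X2. rewrite (h_aff a Ha) by auto. ring. }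
  { intros g Xg. pose proof (h_bd b g Hb (HX g Xg)). pose proof (h_bd a g Ha (HX g Xg)).
    split; apply Rabs_sub_bd; lra. }
  { lra. }
  { intros g Xg. destruct (Rle_dec (h a g) (d / 2)).
    - left. assert (h b g > d1) by (apply Hb1; split; auto).
      assert (d2 <= d1) by apply Rmin_l. lra.
    - right. assert (d2 <= d / 2) by apply Rmin_r. lra. }
  exists (cmb t b a). split. apply cmb_in; auto.
  exists (d2 / 2). split. lra. intros g Xg. rewrite h_cmb by auto.
  specialize (Hall g Xg). simpl in Hall. nra.
Qed.
End Minimax.


Section Main.
Variable k : KField.
Notation KK := (scal k).
Notation Kt := (Defs.Kt KK).
Notation kadd := (Kadd KK).
Notation kmul := (Kmul KK).
Notation kopp := (Kopp KK).
Notation kabs := (Kabs KK).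
Notation kofR := (KofR KK).
Notation k0 := (K0 KK).
Notation k1 := (K1 KK).
Add Ring KR : (Kring k).

Variables (E : LCHS KK) (Om w : Type) (G : (car E -> Kt) -> Prop)
  (F : FScal KK Om) (TK : (Om -> Kt) -> (w -> Kt)) (nu : w -> R) (U : w -> Prop).
Hypothesis HTK : TK_linear F TK.
Hypothesis Hnu : forall x, 0 < nu x.
Hypothesis HB : Fnu_Banach F TK nu.
Hypothesis Hcpt : fcompact F (Bnu F TK nu).
Hypothesis HTKd : forall x, fdual F (fun g => TK g x).
Variable Cf : R.
Hypothesis HCf : 0 < Cf.
Hypothesis HCfix : forall g, inFnu F TK nu g -> forall c, 0 <= c ->
    (forall x, U x -> kabs (TK g x) * nu x <= c) -> nu_le TK nu g (Cf * c).

Notation memF := (mem F).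
Notation Bn := (Bnu F TK nu).
Definition fadd (g1 g2 : Om -> Kt) : Om -> Kt := fun z => kadd (g1 z) (g2 z).
Definition fscale (c : Kt) (g : Om -> Kt) : Om -> Kt := fun z => kmul c (g z).
Definition pc (t : R) (g1 g2 : Om -> Kt) := fadd (fscale (kofR (1 - t)) g1) (fscale (kofR t) g2).
Definition fzero : Om -> Kt := fun _ => k0.

Lemma memF_add g1 g2 : memF g1 -> memF g2 -> memF (fadd g1 g2).
Proof. exact (mem_add _ _ _ _ _ _ F g1 g2). Qed.
Lemma memF_scale c g : memF g -> memF (fscale c g).
Proof. exact (mem_scale _ _ _ _ _ _ F c g). Qed.
Lemma memF_0 : memF fzero.
Proof. exact (mem0 _ _ _ _ _ _ F). Qed.
Lemma memF_pc t g1 g2 : memF g1 -> memF g2 -> memF (pc t g1 g2).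
Proof. intros; apply memF_add; apply memF_scale; auto. Qed.

Lemma TK_add g1 g2 x : memF g1 -> memF g2 -> TK (fadd g1 g2) x = kadd (TK g1 x) (TK g2 x).
Proof. intros H1 H2. destruct HTK as [H _]. unfold fadd. rewrite H; auto. Qed.
Lemma TK_scale c g x : memF g -> TK (fscale c g) x = kmul c (TK g x).
Proof. intros H1. destruct HTK as [_ H]. unfold fscale. rewrite H; auto. Qed.
Lemma TK_0 x : TK fzero x = k0.
Proof. replace fzero with (fscale k0 fzero). rewrite TK_scale. ring. apply memF_0.
  apply functional_extensionality; intro; unfold fscale, fzero; ring. Qed.

Definition lin (y : (Om -> Kt) -> Kt) : Prop :=
  (forall g1 g2, memF g1 -> memF g2 -> y (fadd g1 g2) = kadd (y g1) (y g2)) /\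
  (forall c g, memF g -> y (fscale c g) = kmul c (y g)).

Lemma fdual_lin y : fdual F y -> lin y.
Proof. intros [H1 [H2 _]]. split; auto. Qed.

Lemma lin_0 y : lin y -> y fzero = k0.
Proof. intros [_ H]. replace fzero with (fscale k0 fzero). rewrite H. ring. apply memF_0.
  apply functional_extensionality; intro; unfold fscale, fzero; ring. Qed.

Lemma lin_pc y t g1 g2 : lin y -> memF g1 -> memF g2 ->
  y (pc t g1 g2) = kadd (kmul (kofR (1 - t)) (y g1)) (kmul (kofR t) (y g2)).
Proof. intros [H1 H2] ? ?. unfold pc. rewrite H1, !H2; auto; apply memF_scale; auto. Qed.

Lemma fsub_eq g1 g2 : fsub g1 g2 = fadd g1 (fscale (kopp k1) g2).
Proof. apply functional_extensionality; intro; unfold fsub, fadd, fscale; ring. Qed.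

Lemma memF_sub g1 g2 : memF g1 -> memF g2 -> memF (fsub g1 g2).
Proof. intros. rewrite fsub_eq. apply memF_add; auto. apply memF_scale; auto. Qed.

Lemma lin_sub y g1 g2 : lin y -> memF g1 -> memF g2 ->
  y (fsub g1 g2) = kadd (y g1) (kopp (y g2)).
Proof. intros [H1 H2] ? ?. rewrite fsub_eq, H1, H2; auto. ring. apply memF_scale; auto. Qed.

Lemma fsn_split j g1 g2 : memF g1 -> memF g2 -> fsn F j g1 <= fsn F j (fsub g1 g2) + fsn F j g2.
Proof. intros. replace g1 with (fadd (fsub g1 g2) g2) at 1.
  apply fsn_tri; auto. apply memF_sub; auto.
  apply functional_extensionality; intro; unfold fsub, fadd; ring. Qed.

Lemma fdual_add y1 y2 : fdual F y1 -> fdual F y2 -> fdual F (fun g => kadd (y1 g) (y2 g)).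
Proof.
  intros [A1 [B1 [j1 [C1 H1]]]] [A2 [B2 [j2 [C2 H2]]]].
  split; [|split].
  - intros. rewrite A1, A2 by auto. ring.
  - intros. rewrite B1, B2 by auto. ring.
  - destruct (fsn_directed _ _ _ _ _ _ F j1 j2) as [l [C HC]].
    exists l, (Rabs C1 * C + Rabs C2 * C). intros g Hg.
    destruct (HC g Hg) as [Q1 Q2].
    eapply Rle_trans. apply kabs_tri.
    specialize (H1 g Hg). specialize (H2 g Hg).
    assert (0 <= fsn F j1 g) by (apply fsn_nonneg; auto).
    assert (0 <= fsn F j2 g) by (apply fsn_nonneg; auto).
    assert (C1 * fsn F j1 g <= Rabs C1 * fsn F j1 g) by (apply Rmult_le_compat_r; auto; apply Rle_abs).
    assert (C2 * fsn F j2 g <= Rabs C2 * fsn F j2 g) by (apply Rmult_le_compat_r; auto; apply Rle_abs).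
    assert (Rabs C1 * fsn F j1 g <= Rabs C1 * (C * fsn F l g)) by (apply Rmult_le_compat_l; auto; apply Rabs_pos).
    assert (Rabs C2 * fsn F j2 g <= Rabs C2 * (C * fsn F l g)) by (apply Rmult_le_compat_l; auto; apply Rabs_pos).
    nra.
Qed.

Lemma fdual_scale c y : fdual F y -> fdual F (fun g => kmul c (y g)).
Proof.
  intros [A1 [B1 [j1 [C1 H1]]]]. split; [|split].
  - intros. rewrite A1 by auto. ring.
  - intros. rewrite B1 by auto. ring.
  - exists j1, (kabs c * C1). intros g Hg. rewrite kabs_mul.
    specialize (H1 g Hg). pose proof (kabs_nonneg k c). nra.
Qed.

Lemma fdual_0 : fdual F (fun _ => k0).
Proof. split; [|split]. intros; ring. intros; ring.
  destruct (fidx_inh _ _ _ _ _ _ F) as [j]. exists j, 0. intros. rewrite kabs_0. lra. Qed.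

Lemma fdual_sub y1 y2 : fdual F y1 -> fdual F y2 -> fdual F (fun g => kadd (y1 g) (kopp (y2 g))).
Proof. intros. replace (fun g => kadd (y1 g) (kopp (y2 g))) with
  (fun g => kadd (y1 g) ((fun g => kmul (kopp k1) (y2 g)) g)).
  apply fdual_add; auto. apply fdual_scale; auto.
  apply functional_extensionality; intro; ring. Qed.

Lemma fopen_re (P : Prop) y beta : fdual F y -> fopen F (fun g => P /\ Kre k (y g) > beta).
Proof.
  intros Hy. pose proof (fdual_lin y Hy) as Ly. destruct Hy as [_ [_ [j [C HC]]]].
  intros f0 Hf0 [HP Hb]. exists j, ((Kre k (y f0) - beta) / (Rabs C + 1)). split.
  { apply Rdiv_lt_0_compat. lra. pose proof (Rabs_pos C); lra. }
  intros g Hg Hd. split; auto.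
  assert (E1 : y g = kadd (y f0) (y (fsub g f0))).
  { rewrite lin_sub by auto. ring. }
  rewrite E1, kre_add.
  pose proof (kre_abs k (y (fsub g f0))).
  pose proof (HC _ (memF_sub _ _ Hg Hf0)).
  assert (0 <= fsn F j (fsub g f0)) by (apply fsn_nonneg, memF_sub; auto).
  assert (C * fsn F j (fsub g f0) <= (Rabs C + 1) * fsn F j (fsub g f0)).
  { apply Rmult_le_compat_r; auto. pose proof (Rle_abs C); lra. }
  assert ((Rabs C + 1) * fsn F j (fsub g f0) < Kre k (y f0) - beta).
  { apply Rmult_lt_reg_l with (/ (Rabs C + 1)). apply Rinv_0_lt_compat; pose proof (Rabs_pos C); lra.
    rewrite <- Rmult_assoc, Rinv_l by (pose proof (Rabs_pos C); lra). rewrite Rmult_1_l.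
    rewrite Rmult_comm. exact Hd. }
  pose proof (kre_ge k (y (fsub g f0))). lra.
Qed.

Lemma Bn_mem g : Bn g -> memF g.
Proof. intros [[H _] _]; auto. Qed.

Lemma Bn_0 : Bn fzero.
Proof. split. split. apply memF_0. exists 0. intros; rewrite TK_0, kabs_0; lra.
  intros x; rewrite TK_0, kabs_0; lra. Qed.

Lemma Bn_comb c d g1 g2 : Bn g1 -> Bn g2 -> kabs c + kabs d <= 1 ->
  Bn (fadd (fscale c g1) (fscale d g2)).
Proof.
  intros [[M1 _] N1] [[M2 _] N2] Hcd.
  assert (Hm : memF (fadd (fscale c g1) (fscale d g2))) by (apply memF_add; apply memF_scale; auto).
  assert (Hb : nu_le TK nu (fadd (fscale c g1) (fscale d g2)) 1).
  { intros x. rewrite TK_add, !TK_scale by (auto; apply memF_scale; auto).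
    specialize (N1 x). specialize (N2 x). pose proof (Hnu x).
    pose proof (kabs_tri k (kmul c (TK g1 x)) (kmul d (TK g2 x))).
    rewrite !kabs_mul in H0. pose proof (kabs_nonneg k c). pose proof (kabs_nonneg k d).
    pose proof (kabs_nonneg k (TK g1 x)). pose proof (kabs_nonneg k (TK g2 x)).
    apply Rle_trans with ((kabs c * kabs (TK g1 x) + kabs d * kabs (TK g2 x)) * nu x).
    apply Rmult_le_compat_r; lra.
    assert (kabs c * (kabs (TK g1 x) * nu x) <= kabs c * 1) by (apply Rmult_le_compat_l; auto).
    assert (kabs d * (kabs (TK g2 x) * nu x) <= kabs d * 1) by (apply Rmult_le_compat_l; auto).
    nra. }
  split; auto. split; auto. exists 1; auto.
Qed.

Lemma Bn_scale c g : Bn g -> kabs c <= 1 -> Bn (fscale c g).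
Proof. intros Hg Hc.
  replace (fscale c g) with (fadd (fscale c g) (fscale k0 fzero)).
  apply Bn_comb; auto. apply Bn_0. rewrite kabs_0; lra.
  apply functional_extensionality; intro; unfold fadd, fscale, fzero; ring. Qed.

Lemma Bn_pc t g1 g2 : 0 <= t <= 1 -> Bn g1 -> Bn g2 -> Bn (pc t g1 g2).
Proof. intros Ht H1 H2. apply Bn_comb; auto. rewrite !kabs_ofR, !Rabs_right; lra. Qed.

Lemma Bn_absconv : fabs_convex Bn.
Proof. intros g1 g2 c d H1 H2 Hcd. exact (Bn_comb c d g1 g2 H1 H2 Hcd). Qed.

Lemma Bn_into g t : inFnu F TK nu g -> nu_le TK nu g t -> 0 < t -> Bn (fscale (kofR (/ t)) g).
Proof.
  intros [Hm _] Hn Ht. assert (Hm' : memF (fscale (kofR (/ t)) g)) by (apply memF_scale; auto).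
  assert (Hb : nu_le TK nu (fscale (kofR (/ t)) g) 1).
  { intros x. rewrite TK_scale, kabs_mul, kabs_ofR, Rabs_right by (auto; left; apply Rinv_0_lt_compat; auto).
    specialize (Hn x). rewrite Rmult_assoc. apply Rmult_le_reg_l with t; auto.
    rewrite <- Rmult_assoc, Rinv_r by lra. lra. }
  split; auto. split; auto. exists 1; auto.
Qed.

Lemma zero_of_nu g : inFnu F TK nu g -> nu_le TK nu g 0 -> g = fzero.
Proof. intros H1 H2. apply functional_extensionality. intros z. destruct HB as [H _]. apply H; auto. Qed.

Lemma bnd_lin y c g t : lin y -> (forall g, Bn g -> kabs (y g) <= c) ->
  inFnu F TK nu g -> nu_le TK nu g t -> 0 <= t -> kabs (y g) <= c * t.
Proof.
  intros Ly Hy Hg Hn Ht. destruct Ht as [Ht|Ht].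
  - pose proof (Hy _ (Bn_into g t Hg Hn Ht)). destruct Ly as [_ L2].
    rewrite L2 in H by (destruct Hg; auto). rewrite kabs_mul, kabs_ofR, Rabs_right in H
      by (left; apply Rinv_0_lt_compat; auto).
    apply Rmult_le_compat_l with (r := t) in H; [|lra].
    rewrite <- Rmult_assoc, Rinv_r in H by lra. lra.
  - subst t. rewrite (zero_of_nu g Hg Hn), lin_0, kabs_0 by auto. lra.
Qed.

Fixpoint lmax (l : list nat) : R := match l with nil => 0 | n :: l => Rmax (INR n) (lmax l) end.
Lemma lmax_ge l n : In n l -> INR n <= lmax l.
Proof. induction l; simpl; [tauto|]. intros [<-|H]. apply Rmax_l. eapply Rle_trans; [apply IHl; auto|apply Rmax_r]. Qed.

Lemma fdual_bounded y : fdual F y -> exists c, 0 < c /\ forall g, Bn g -> kabs (y g) <= c.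
Proof.
  intros Hy. destruct Hy as [_ [_ [j [C HC]]]].
  destruct Hcpt as [HBm Hcov].
  destruct (Hcov nat (fun n g => fsn F j g < INR n)) as [l Hl].
  { intros n f0 Hf0 Hlt. exists j, (INR n - fsn F j f0). split. lra.
    intros g Hg Hd. pose proof (fsn_split j g f0 Hg Hf0). lra. }
  { intros g Hg. destruct (INR_unbounded (fsn F j g)) as [n Hn]. exists n. lra. }
  exists (Rabs C * lmax l + 1). split.
  { assert (0 <= lmax l). { clear. induction l; simpl. lra. eapply Rle_trans; [apply IHl|apply Rmax_r]. }
    pose proof (Rabs_pos C). nra. }
  intros g Hg. destruct (Hl g Hg) as [n [Hin Hn]]. pose proof (lmax_ge l n Hin).
  pose proof (HC g (HBm g Hg)). assert (0 <= fsn F j g) by (apply fsn_nonneg; auto).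
  assert (C * fsn F j g <= Rabs C * fsn F j g) by (apply Rmult_le_compat_r; auto; apply Rle_abs).
  assert (Rabs C * fsn F j g <= Rabs C * lmax l) by (apply Rmult_le_compat_l; [apply Rabs_pos|lra]).
  lra.
Qed.

Definition phi (x : w) (g : Om -> Kt) : Kt := kmul (kofR (nu x)) (TK g x).
Definition Lfun (L : list (w * Kt)) (g : Om -> Kt) : Kt :=
  fold_right (fun p acc => kadd (kmul (snd p) (phi (fst p) g)) acc) k0 L.
Definition l1 (L : list (w * Kt)) : R := fold_right (fun p acc => kabs (snd p) + acc) 0 L.
Definition suppU (L : list (w * Kt)) : Prop := forall p, In p L -> U (fst p).
Definition sL (c : Kt) (L : list (w * Kt)) := map (fun p => (fst p, kmul c (snd p))) L.
Definition cmbL (t : R) L1 L2 := sL (kofR (1 - t)) L1 ++ sL (kofR t) L2.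

Lemma Lfun_app L1 L2 g : Lfun (L1 ++ L2) g = kadd (Lfun L1 g) (Lfun L2 g).
Proof. induction L1; simpl. ring. unfold Lfun in *; simpl. rewrite IHL1. ring. Qed.
Lemma Lfun_sL c L g : Lfun (sL c L) g = kmul c (Lfun L g).
Proof. induction L; simpl. unfold Lfun; simpl; ring. unfold Lfun in *; simpl. rewrite IHL. ring. Qed.
Lemma l1_app L1 L2 : l1 (L1 ++ L2) = l1 L1 + l1 L2.
Proof. induction L1; simpl. unfold l1; simpl; ring. unfold l1 in *; simpl. rewrite IHL1. ring. Qed.
Lemma l1_sL c L : l1 (sL c L) = kabs c * l1 L.
Proof. induction L; simpl. unfold l1; simpl; ring. unfold l1 in *; simpl. rewrite IHL, kabs_mul. ring. Qed.
Lemma l1_nonneg L : 0 <= l1 L.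
Proof. induction L; simpl. unfold l1; simpl; lra. unfold l1 in *; simpl. pose proof (kabs_nonneg k (snd a)). lra. Qed.
Lemma suppU_app L1 L2 : suppU L1 -> suppU L2 -> suppU (L1 ++ L2).
Proof. intros H1 H2 p Hp. apply in_app_or in Hp. destruct Hp; auto. Qed.
Lemma suppU_sL c L : suppU L -> suppU (sL c L).
Proof. intros H p Hp. unfold sL in Hp. apply in_map_iff in Hp. destruct Hp as [q [<- Hq]]. simpl. apply H; auto. Qed.

Lemma fdual_phi x : fdual F (phi x).
Proof. unfold phi. apply (fdual_scale (kofR (nu x)) (fun g => TK g x)). apply HTKd. Qed.

Lemma fdual_Lfun L : fdual F (Lfun L).
Proof. induction L as [|p L IH].
  - exact fdual_0.
  - change (fdual F (fun g => kadd (kmul (snd p) (phi (fst p) g)) (Lfun L g))).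
    apply fdual_add; auto. apply (fdual_scale (snd p) (phi (fst p))). apply fdual_phi.
Qed.

Lemma phi_bd x g : Bn g -> kabs (phi x g) <= 1.
Proof. intros [_ Hn]. unfold phi. rewrite kabs_mul, kabs_ofR, Rabs_right by (left; apply Hnu).
  specialize (Hn x). lra. Qed.

Lemma Lfun_bd L g : Bn g -> kabs (Lfun L g) <= l1 L.
Proof. intros Hg. induction L as [|p L IH]; simpl.
  - unfold Lfun, l1; simpl. rewrite kabs_0; lra.
  - unfold Lfun, l1 in *; simpl. eapply Rle_trans. apply kabs_tri. rewrite kabs_mul.
    pose proof (phi_bd (fst p) g Hg). pose proof (kabs_nonneg k (snd p)).
    pose proof (kabs_nonneg k (phi (fst p) g)). nra.
Qed.

Lemma AL (y : (Om -> Kt) -> Kt) (c eps : R) : fdual F y -> 0 < c -> 0 < eps ->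
  (forall g, Bn g -> kabs (y g) <= c) ->
  exists L, suppU L /\ l1 L <= Cf * c /\
    forall g, Bn g -> kabs (kadd (y g) (kopp (Lfun L g))) <= eps.
Proof.
  intros Hy Hc He Hyc. set (R0 := Cf * c). assert (HR : 0 < R0) by (unfold R0; nra).
  pose proof (fdual_lin y Hy) as Ly.
  set (As := fun L => suppU L /\ l1 L <= R0).
  set (h := fun L g => Kre k (kadd (Lfun L g) (kopp (y g))) + eps).
  assert (Hpt : forall g, Bn g -> exists L, As L /\ h L g > eps / 2).
  { intros g Hg. destruct (Rlt_dec (Kre k (y g)) (eps / 2)) as [Hlt|Hge].
    - exists nil. split. split. intros p []. unfold l1; simpl; lra.
      unfold h, Lfun; simpl. rewrite kre_add, kre_opp.
      replace (Kre k k0) with 0. lra. rewrite <- kofR_0, kre_ofR. auto.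
    - assert (Hex : exists x, U x /\ R0 * kabs (phi x g) > Kre k (y g) - eps / 2).
      { apply NNPP. intro Hn.
        assert (Hall : forall x, U x -> R0 * kabs (phi x g) <= Kre k (y g) - eps / 2).
        { intros x Ux. apply Rnot_lt_le. intro. apply Hn. exists x. split; auto. }
        set (c0 := (Kre k (y g) - eps / 2) / R0).
        assert (Hc0 : 0 <= c0). { unfold c0. apply Rdiv_le_0_compat; lra. }
        assert (Hnl := HCfix g (proj1 Hg) c0 Hc0).
        assert (Hnl' : nu_le TK nu g (Cf * c0)).
        { apply Hnl. intros x Ux. specialize (Hall x Ux). unfold phi in Hall.
          rewrite kabs_mul, kabs_ofR, Rabs_right in Hall by (left; apply Hnu).
          unfold c0. apply Rmult_le_reg_l with R0; auto. replace (R0 * ((Kre k (y g) - eps / 2) / R0)) with (Kre k (y g) - eps / 2) by (field; lra). rewrite (Rmult_comm (kabs _) (nu x)). lra. }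
        assert (Hb := bnd_lin y c g (Cf * c0) Ly Hyc (proj1 Hg) Hnl').
        assert (c * (Cf * c0) = Kre k (y g) - eps / 2).
        { unfold c0, R0 in *. field. lra. }
        pose proof (kre_le k (y g)). assert (H9 : 0 <= Cf * c0) by nra. specialize (Hb H9). lra. }
      destruct Hex as [x [Ux Hx]]. destruct (krot k (phi x g)) as [l [Hl1 Hl2]].
      exists ((x, kmul (kofR R0) l) :: nil). split. split.
      + intros p [<-|[]]. auto.
      + unfold l1; simpl. rewrite kabs_mul, kabs_ofR, Hl1, Rabs_right; lra.
      + unfold h, Lfun; simpl.
        replace (kadd (kadd (kmul (kmul (kofR R0) l) (phi x g)) k0) (kopp (y g)))
          with (kadd (kofR (R0 * kabs (phi x g))) (kopp (y g))).
        rewrite kre_add, kre_opp, kre_ofR. lra.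
        rewrite kofR_mul, <- Hl2. ring. }
  destruct Hcpt as [HBm Hcov].
  destruct (Hcov (list (w * Kt)) (fun L g => As L /\ Kre k (kadd (Lfun L g) (kopp (y g))) > - (eps / 2)))
    as [ls Hls].
  { intros L. apply fopen_re. apply fdual_sub; auto. apply fdual_Lfun. }
  { intros g Hg. destruct (Hpt g Hg) as [L [HA HL]]. exists L. split; auto. unfold h in HL. lra. }
  destruct (minimax_list (Om -> Kt) (list (w * Kt)) pc As cmbL h (R0 + c + eps) Bn nil) with (l := ls) (X := Bn) (d := eps / 2)
    as [L0 [HA0 [d' [Hd' HL0]]]].
  { split. intros p []. unfold l1; simpl; lra. }
  { intros t L1 L2 Ht [S1 N1] [S2 N2]. split. apply suppU_app; apply suppU_sL; auto.
    unfold cmbL. rewrite l1_app, !l1_sL, !kabs_ofR, !Rabs_right by lra. nra. }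
  { intros t L1 L2 g Ht _ _ _. unfold h, cmbL. rewrite Lfun_app, !Lfun_sL.
    replace (kadd (kadd (kmul (kofR (1 - t)) (Lfun L1 g)) (kmul (kofR t) (Lfun L2 g))) (kopp (y g)))
      with (kadd (kmul (kofR (1 - t)) (kadd (Lfun L1 g) (kopp (y g))))
                 (kmul (kofR t) (kadd (Lfun L2 g) (kopp (y g))))).
    rewrite !kre_add, !kre_ofR_mul, !kre_add. ring.
    assert (Hs : kadd (kofR (1 - t)) (kofR t) = k1)
      by (rewrite <- kofR_add; replace (1 - t + t) with 1 by ring; apply kofR_1).
    transitivity (kadd (kadd (kmul (kofR (1 - t)) (Lfun L1 g)) (kmul (kofR t) (Lfun L2 g)))
      (kmul (kadd (kofR (1 - t)) (kofR t)) (kopp (y g)))). ring. rewrite Hs. ring. }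
  { intros L _ t g1 g2 Ht X1 X2. unfold h.
    rewrite (lin_pc (Lfun L)), (lin_pc y) by (auto; try apply fdual_lin, fdual_Lfun; apply Bn_mem; auto).
    replace (kadd (kadd (kmul (kofR (1 - t)) (Lfun L g1)) (kmul (kofR t) (Lfun L g2)))
              (kopp (kadd (kmul (kofR (1 - t)) (y g1)) (kmul (kofR t) (y g2)))))
      with (kadd (kmul (kofR (1 - t)) (kadd (Lfun L g1) (kopp (y g1))))
                 (kmul (kofR t) (kadd (Lfun L g2) (kopp (y g2))))) by ring.
    rewrite !kre_add, !kre_ofR_mul, !kre_add. ring. }
  { intros L g [_ HL] Hg. unfold h.
    pose proof (kre_abs k (kadd (Lfun L g) (kopp (y g)))).
    pose proof (kabs_tri k (Lfun L g) (kopp (y g))). rewrite kabs_opp in H0.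
    pose proof (Lfun_bd L g Hg). pose proof (Hyc g Hg).
    apply Rle_trans with (Rabs (Kre k (kadd (Lfun L g) (kopp (y g)))) + Rabs eps).
    apply Rabs_triang. rewrite (Rabs_right eps) by lra. lra. }
  { auto. }
  { intros t g1 g2 Ht H1 H2. apply Bn_pc; auto. }
  { lra. }
  { intros g Hg. destruct (Hls g Hg) as [L [HL [HAL HL2]]]. exists L. split; auto. split; auto. unfold h. lra. }
  exists L0. destruct HA0 as [S0 N0]. split; auto. split; auto.
  intros g Hg.
  set (z := kadd (y g) (kopp (Lfun L0 g))).
  destruct (krot k z) as [l [Hl1 Hl2]].
  assert (Hg' : Bn (fscale l g)) by (apply Bn_scale; auto; lra).
  specialize (HL0 _ Hg'). unfold h in HL0.
  assert (Lz : lin (Lfun L0)) by (apply fdual_lin, fdual_Lfun).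
  destruct Ly as [_ Ly2]. destruct Lz as [_ Lz2].
  rewrite Ly2, Lz2 in HL0 by (apply Bn_mem; auto).
  replace (kadd (kmul l (Lfun L0 g)) (kopp (kmul l (y g)))) with (kopp (kmul l z)) in HL0
    by (unfold z; ring).
  rewrite Hl2, kre_opp, kre_ofR in HL0. lra.
Qed.

Notation vadd := (vadd E). Notation vscale := (vscale E). Notation vzero := (vzero E).
Notation vopp := (vopp E). Notation sn := (sn E).

Lemma vscale_k0 x : vscale k0 x = vzero.
Proof.
  set (a := vscale k0 x).
  assert (Ha : a = vadd a a). { unfold a. rewrite <- vscale_distr_s. f_equal. ring. }
  rewrite <- (vadd_opp _ E a). rewrite Ha at 2. rewrite <- vadd_assoc, vadd_opp, vadd_0. auto.
Qed.

Lemma vopp_scale x : vopp x = vscale (kopp k1) x.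
Proof.
  set (b := vscale (kopp k1) x).
  assert (Hb : vadd x b = vzero).
  { unfold b. rewrite <- (vscale_1 _ E x) at 1. rewrite <- vscale_distr_s.
    replace (kadd k1 (kopp k1)) with k0 by ring. apply vscale_k0. }
  rewrite <- (vadd_0 _ E (vopp x)). rewrite <- Hb. rewrite vadd_assoc.
  rewrite (vadd_comm _ E (vopp x) x), vadd_opp. rewrite vadd_comm, vadd_0. auto.
Qed.

Lemma vscale_v0 c : vscale c vzero = vzero.
Proof. transitivity (vscale c (vscale k0 vzero)). rewrite vscale_k0; auto.
  rewrite vscale_assoc. replace (kmul c k0) with k0 by ring. apply vscale_k0. Qed.

Lemma sn_0 a : sn a vzero = 0.
Proof. transitivity (sn a (vscale k0 vzero)). rewrite vscale_k0; auto. rewrite sn_hom, kabs_0. ring. Qed.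

Lemma sn_opp a x : sn a (vopp x) = sn a x.
Proof. rewrite vopp_scale, sn_hom, kabs_opp, kabs_1. ring. Qed.

Lemma vsub_sym_sn a x y : sn a (vsub E y x) = sn a (vsub E x y).
Proof.
  assert (vsub E y x = vopp (vsub E x y)).
  { unfold vsub. rewrite !vopp_scale, vscale_distr_v, vscale_assoc.
    replace (kmul (kopp k1) (kopp k1)) with k1 by ring. rewrite vscale_1, vadd_comm. auto. }
  rewrite H, sn_opp. auto.
Qed.

Lemma vsub_add_r x z y : vsub E (vadd x z) y = vadd (vsub E x y) z.
Proof. unfold vsub. rewrite <- !vadd_assoc. f_equal. apply vadd_comm. Qed.

Lemma vsub_xx x : vsub E x x = vzero.
Proof. apply vadd_opp. Qed.

Lemma vadd_vsub x y : vadd y (vsub E x y) = x.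
Proof. unfold vsub. rewrite vadd_assoc, (vadd_comm _ E y x), <- vadd_assoc, vadd_opp, vadd_0. auto. Qed.

Lemma vsub_0 x : vsub E x vzero = x.
Proof. unfold vsub. rewrite vopp_scale, vscale_v0, vadd_0. auto. Qed.

Lemma vsub_eq0 x y : vsub E x y = vzero -> x = y.
Proof. intros H. rewrite <- (vadd_vsub x y), H, vadd_0. auto. Qed.

Lemma sn_split a x y : sn a x <= sn a y + sn a (vsub E x y).
Proof. rewrite <- (vadd_vsub x y) at 1. apply sn_tri. Qed.

Lemma dual_0 e : is_dual E e -> e vzero = k0.
Proof. intros [_ [H _]]. transitivity (e (vscale k0 vzero)). rewrite vscale_k0; auto. rewrite H. ring. Qed.

Lemma dual_sub e x y : is_dual E e -> e (vsub E x y) = kadd (e x) (kopp (e y)).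
Proof. intros [H1 [H2 _]]. unfold vsub. rewrite H1, vopp_scale, H2. ring. Qed.

Lemma kre_0 : Kre k k0 = 0.
Proof. rewrite <- kofR_0, kre_ofR. auto. Qed.

Lemma ksub_eq a b : kadd a (kopp b) = k0 -> a = b.
Proof. intros H. transitivity (kadd (kadd a (kopp b)) b). ring. rewrite H. ring. Qed.

Lemma pow_half_pos n : 0 < (/ 2) ^ n.
Proof. apply pow_lt. lra. Qed.

Lemma pow_half_le N d : (/ 2) ^ (N + d) <= (/ 2) ^ N.
Proof. induction d. rewrite Nat.add_0_r; lra. rewrite Nat.add_succ_r. simpl. pose proof (pow_half_pos (N + d)). lra. Qed.

Lemma pow_half_small r : 0 < r -> exists N, (/ 2) ^ N < r.
Proof. intros Hr. destruct (pow_lt_1_zero (/ 2)) with (y := r) as [N HN]; auto.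
  rewrite Rabs_right; lra. exists N. specialize (HN N (le_n N)).
  rewrite Rabs_right in HN; auto. left; apply pow_half_pos. Qed.

Lemma pow_half_mono n m : (m <= n)%nat -> (/ 2) ^ n <= (/ 2) ^ m.
Proof. intros H. replace n with (m + (n - m))%nat by lia. apply pow_half_le. Qed.

Section Ext.
Variable f : w -> car E.
Hypothesis Hlb : lb E nu U f.

Definition bnd a Ca := forall x, U x -> sn a (vscale (kofR (nu x)) (f x)) <= Ca.
Definition Dset (v : car E) : Prop := forall a Ca, bnd a Ca -> 0 <= Ca -> sn a v <= Ca.

Lemma bnd_ex a : exists Ca, 0 <= Ca /\ bnd a Ca.
Proof. destruct (Hlb a) as [C HC]. exists (Rmax C 0). split. apply Rmax_r.
  intros x Ux. eapply Rle_trans; [|apply Rmax_l]. apply HC. exists x; auto. Qed.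

Lemma mulset_iff r v : 0 < r ->
  (mulset E Dset r v <-> forall a Ca, bnd a Ca -> 0 <= Ca -> sn a v <= r * Ca).
Proof.
  intros Hr. split.
  - intros [d [Hd ->]] a Ca HCa HC0. rewrite sn_hom, kabs_ofR, Rabs_right by lra.
    specialize (Hd a Ca HCa HC0). nra.
  - intros H. exists (vscale (kofR (/ r)) v). split.
    + intros a Ca HCa HC0. rewrite sn_hom, kabs_ofR, Rabs_right by (left; apply Rinv_0_lt_compat; auto).
      specialize (H a Ca HCa HC0). apply Rmult_le_reg_l with r; auto.
      rewrite <- Rmult_assoc, Rinv_r by lra. lra.
    + rewrite vscale_assoc, <- kofR_mul, Rinv_r, kofR_1, vscale_1 by lra. auto.
Qed.

Lemma D_closed : is_closed E Dset.
Proof.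
  intros v Hv. apply not_all_ex_not in Hv. destruct Hv as [a Hv].
  apply not_all_ex_not in Hv. destruct Hv as [Ca Hv].
  apply imply_to_and in Hv. destruct Hv as [HCa Hv]. apply imply_to_and in Hv. destruct Hv as [HC0 Hv].
  apply Rnot_le_lt in Hv.
  exists a, (sn a v - Ca). split. lra. intros y Hy HyD.
  specialize (HyD a Ca HCa HC0). pose proof (sn_split a v y). rewrite vsub_sym_sn in Hy. lra.
Qed.

Lemma D_bounded : Defs.bounded E Dset.
Proof. intros a. destruct (bnd_ex a) as [Ca [HC0 HCa]]. exists Ca. intros v Hv. apply Hv; auto. Qed.

Lemma D_absconv : abs_convex E Dset.
Proof.
  intros x y c d Hx Hy Hcd a Ca HCa HC0.
  eapply Rle_trans. apply sn_tri. rewrite !sn_hom.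
  specialize (Hx a Ca HCa HC0). specialize (Hy a Ca HCa HC0).
  pose proof (kabs_nonneg k c). pose proof (kabs_nonneg k d).
  pose proof (sn_nonneg _ E a x). pose proof (sn_nonneg _ E a y).
  assert (kabs c * sn a x <= kabs c * Ca) by (apply Rmult_le_compat_l; auto).
  assert (kabs d * sn a y <= kabs d * Ca) by (apply Rmult_le_compat_l; auto).
  nra.
Qed.

Definition Lvec (L : list (w * Kt)) : car E :=
  fold_right (fun p acc => vadd (vscale (snd p) (vscale (kofR (nu (fst p))) (f (fst p)))) acc) vzero L.

Lemma Lvec_bd L a Ca : suppU L -> bnd a Ca -> 0 <= Ca -> sn a (Lvec L) <= l1 L * Ca.
Proof.
  intros HL HCa HC0. induction L as [|p L IH]; simpl.
  - rewrite sn_0. unfold l1; simpl; lra.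
  - unfold l1 in *; simpl. eapply Rle_trans. apply sn_tri. rewrite sn_hom.
    assert (IH' : sn a (Lvec L) <= fold_right (fun p acc => kabs (snd p) + acc) 0 L * Ca).
    { apply IH. intros q Hq. apply HL. right; auto. }
    assert (sn a (vscale (kofR (nu (fst p))) (f (fst p))) <= Ca) by (apply HCa, HL; left; auto).
    pose proof (kabs_nonneg k (snd p)).
    assert (kabs (snd p) * sn a (vscale (kofR (nu (fst p))) (f (fst p))) <= kabs (snd p) * Ca)
      by (apply Rmult_le_compat_l; auto).
    rewrite Rmult_plus_distr_r. lra.
Qed.

Lemma e_Lvec e h L : is_dual E e -> (forall x, U x -> TK h x = e (f x)) -> suppU L ->
  e (Lvec L) = Lfun L h.
Proof.
  intros He Hh HL. induction L as [|p L IH].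
  - simpl. apply dual_0; auto.
  - destruct He as [H1 [H2 _]]. simpl. rewrite H1, !H2.
    unfold Lfun in *; simpl. rewrite IH. unfold phi. rewrite Hh. auto.
    apply HL; left; auto. intros q Hq; apply HL; right; auto.
Qed.

Hypothesis HLC : locally_complete E.
Hypothesis HG : separating_subspace E G.

Definition rep (y : (Om -> Kt) -> Kt) (z : car E) : Prop :=
  forall e, G e -> forall h, inFnu F TK nu h -> (forall x, U x -> TK h x = e (f x)) -> e z = y h.

Section Iter.
Variables (y : (Om -> Kt) -> Kt) (c : R).
Hypothesis Hy : fdual F y.
Hypothesis Hc : 0 < c.
Hypothesis Hyc : forall g, Bn g -> kabs (y g) <= c.

Definition goodL (r : (Om -> Kt) -> Kt) (cc : R) (L : list (w * Kt)) : Prop :=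
  suppU L /\ l1 L <= Cf * cc /\ forall g, Bn g -> kabs (kadd (r g) (kopp (Lfun L g))) <= cc / 2.

Definition pick r cc : list (w * Kt) := epsilon (inhabits nil) (goodL r cc).

Fixpoint res (n : nat) : (Om -> Kt) -> Kt :=
  match n with
  | O => y
  | S m => fun g => kadd (res m g) (kopp (Lfun (pick (res m) (c * (/ 2) ^ m)) g))
  end.

Definition Ls n := pick (res n) (c * (/ 2) ^ n).

Lemma res_ok n : fdual F (res n) /\ (forall g, Bn g -> kabs (res n g) <= c * (/ 2) ^ n) /\
  goodL (res n) (c * (/ 2) ^ n) (Ls n).
Proof.
  induction n as [|n [IH1 [IH2 _]]].
  - split; auto. split. intros g Hg. simpl. rewrite Rmult_1_r. auto.
    unfold Ls, pick. apply epsilon_spec. simpl.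
    destruct (AL y c (c / 2)) as [L HL]; auto. lra. exists L. rewrite Rmult_1_r. auto.
  - assert (HL : goodL (res n) (c * (/ 2) ^ n) (Ls n)).
    { unfold Ls, pick. apply epsilon_spec.
      destruct (AL (res n) (c * (/ 2) ^ n) (c * (/ 2) ^ n / 2)) as [L HL]; auto.
      pose proof (pow_half_pos n); nra. pose proof (pow_half_pos n); nra. exists L. auto. }
    assert (F1 : fdual F (res (S n))).
    { simpl. apply fdual_sub; auto. apply fdual_Lfun. }
    assert (F2 : forall g, Bn g -> kabs (res (S n) g) <= c * (/ 2) ^ S n).
    { intros g Hg. destruct HL as [_ [_ H3]]. simpl. fold (Ls n).
      specialize (H3 g Hg). simpl. lra. }
    split; auto. split; auto.
    unfold Ls, pick. apply epsilon_spec.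
    destruct (AL (res (S n)) (c * (/ 2) ^ S n) (c * (/ 2) ^ S n / 2)) as [L HL']; auto.
    pose proof (pow_half_pos (S n)); nra. pose proof (pow_half_pos (S n)); nra. exists L. auto.
Qed.

Fixpoint lsum (n : nat) (h : Om -> Kt) : Kt :=
  match n with O => k0 | S m => kadd (lsum m h) (Lfun (Ls m) h) end.

Lemma res_lsum n h : res n h = kadd (y h) (kopp (lsum n h)).
Proof. induction n; simpl. ring. rewrite IHn. fold (Ls n). ring. Qed.

Fixpoint zs (n : nat) : car E :=
  match n with O => vzero | S m => vadd (zs m) (Lvec (Ls m)) end.

Lemma e_zs e h n : is_dual E e -> (forall x, U x -> TK h x = e (f x)) -> e (zs n) = lsum n h.
Proof.
  intros He Hh. induction n; simpl. apply dual_0; auto.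
  destruct He as [H1 H2]. rewrite H1, IHn. f_equal. apply e_Lvec; auto. split; auto.
  destruct (res_ok n) as [_ [_ [HS _]]]. auto.
Qed.

Lemma zs_diff a Ca : bnd a Ca -> 0 <= Ca -> forall n d,
  sn a (vsub E (zs (n + d)) (zs n)) <= 2 * (Cf * c * Ca) * ((/ 2) ^ n - (/ 2) ^ (n + d)).
Proof.
  intros HCa HC0 n d. induction d.
  - rewrite Nat.add_0_r, vsub_xx, sn_0. lra.
  - rewrite Nat.add_succ_r. simpl zs. rewrite vsub_add_r.
    eapply Rle_trans. apply sn_tri.
    destruct (res_ok (n + d)) as [_ [_ [HS [Hl _]]]].
    pose proof (Lvec_bd (Ls (n + d)) a Ca HS HCa HC0).
    assert (l1 (Ls (n + d)) * Ca <= Cf * (c * (/ 2) ^ (n + d)) * Ca) by (apply Rmult_le_compat_r; auto).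
    simpl. pose proof (pow_half_pos (n + d)). nra.
Qed.

Lemma zs_cauchy a Ca N : bnd a Ca -> 0 <= Ca -> forall n m, (N <= n)%nat -> (N <= m)%nat ->
  sn a (vsub E (zs n) (zs m)) <= 2 * (Cf * c * Ca) * (/ 2) ^ N.
Proof.
  intros HCa HC0 n m Hn Hm. assert (0 <= Cf * c * Ca) by (apply Rmult_le_pos; nra).
  destruct (Nat.le_ge_cases n m) as [Hnm|Hnm].
  - rewrite vsub_sym_sn. replace m with (n + (m - n))%nat by lia.
    eapply Rle_trans. apply (zs_diff a Ca HCa HC0).
    pose proof (pow_half_pos (n + (m - n))). pose proof (pow_half_mono n N Hn). apply Rmult_le_compat_l; lra.
  - replace n with (m + (n - m))%nat by lia.
    eapply Rle_trans. apply (zs_diff a Ca HCa HC0).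
    pose proof (pow_half_pos (m + (n - m))). pose proof (pow_half_mono m N Hm). apply Rmult_le_compat_l; lra.
Qed.

Lemma zs_bd a Ca n : bnd a Ca -> 0 <= Ca -> sn a (zs n) <= 2 * (Cf * c * Ca).
Proof.
  intros HCa HC0. pose proof (zs_diff a Ca HCa HC0 0 n). simpl in H.
  rewrite vsub_0 in H. pose proof (pow_half_pos n). assert (0 <= Cf * c * Ca) by (apply Rmult_le_pos; nra).
  nra.
Qed.

Lemma EL : exists z, rep y z /\ forall a Ca, bnd a Ca -> 0 <= Ca -> sn a z <= 2 * (Cf * c * Ca).
Proof.
  assert (HQ : 0 < 2 * Cf * c) by nra.
  destruct (INR_unbounded (2 * Cf * c)) as [N0 HN0].
  destruct (HLC Dset D_closed D_bounded D_absconv zs) as [x [_ Hx]].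
  { intros n. exists N0. apply mulset_iff. lra. intros a Ca HCa HC0.
    pose proof (zs_bd a Ca n HCa HC0). nra. }
  { intros eps He. destruct (pow_half_small (eps / (2 * Cf * c))) as [N HN].
    apply Rdiv_lt_0_compat; lra.
    exists N. intros n m Hn Hm. apply mulset_iff; auto. intros a Ca HCa HC0.
    pose proof (zs_cauchy a Ca N HCa HC0 n m Hn Hm).
    assert (2 * Cf * c * (/ 2) ^ N <= eps).
    { assert (2*Cf*c*(/2)^N < 2*Cf*c*(eps/(2*Cf*c))) by (apply Rmult_lt_compat_l; lra).
      replace (2*Cf*c*(eps/(2*Cf*c))) with eps in H0 by (field; lra). lra. }
    nra. }
  exists x. split.
  - intros e HeG h Hh Hhf.
    destruct HG as [HGd _]. pose proof (HGd e HeG) as He.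
    apply ksub_eq, kabs_eq0. apply Rle_antisym; [|apply kabs_nonneg].
    apply Rnot_lt_le. intro Hpos. set (eta := kabs (kadd (e x) (kopp (y h)))) in *.
    destruct He as [Ea [Es [ae [Ce HCe]]]].
    destruct (bnd_ex ae) as [Ca [HC0 HCa]].
    destruct Hh as [Hhm [Ch HCh]].
    set (th := Rmax Ch 0).
    assert (Hth : nu_le TK nu h th) by (intros z; eapply Rle_trans; [apply HCh|apply Rmax_l]).
    assert (Hth0 : 0 <= th) by apply Rmax_r.
    set (eps1 := eta / (2 * (Rabs Ce * Ca + 1))).
    assert (He1 : 0 < eps1). { unfold eps1. apply Rdiv_lt_0_compat; auto. pose proof (Rabs_pos Ce). nra. }
    destruct (Hx eps1 He1) as [N1 HN1].
    destruct (pow_half_small (eta / (2 * (c * th + 1)))) as [N2 HN2].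
    { apply Rdiv_lt_0_compat; auto. nra. }
    set (n := Nat.max N1 N2).
    specialize (HN1 n (Nat.le_max_l N1 N2)).
    rewrite mulset_iff in HN1 by auto. specialize (HN1 ae Ca HCa HC0).
    destruct (res_ok n) as [Rn1 [Rn2 _]].
    pose proof (bnd_lin (res n) (c * (/ 2) ^ n) h th (fdual_lin _ Rn1) Rn2 (conj Hhm (ex_intro _ Ch HCh)) Hth Hth0) as Hr.
    assert (Eq : kadd (e x) (kopp (y h)) = kadd (kopp (e (vsub E (zs n) x))) (kopp (res n h))).
    { rewrite res_lsum, dual_sub, (e_zs e h n) by (auto; split; auto). ring. }
    assert (B1 : kabs (e (vsub E (zs n) x)) <= Rabs Ce * (eps1 * Ca)).
    { eapply Rle_trans. apply HCe. apply Rle_trans with (Rabs Ce * sn ae (vsub E (zs n) x)).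
      apply Rmult_le_compat_r. apply sn_nonneg. apply Rle_abs.
      apply Rmult_le_compat_l; auto. apply Rabs_pos. }
    assert (B2 : Rabs Ce * (eps1 * Ca) <= eta / 2).
    { unfold eps1. pose proof (Rabs_pos Ce).
      replace (Rabs Ce * (eta / (2 * (Rabs Ce * Ca + 1)) * Ca)) with
        ((eta / 2) * ((Rabs Ce * Ca) / (Rabs Ce * Ca + 1))) by (field; nra).
      assert (Rabs Ce * Ca / (Rabs Ce * Ca + 1) <= 1).
      { apply Rmult_le_reg_r with (Rabs Ce * Ca + 1). nra. field_simplify; nra. }
      nra. }
    assert (B3 : c * (/ 2) ^ n * th < eta / 2).
    { pose proof (pow_half_mono n N2 (Nat.le_max_r N1 N2)).
      assert ((/ 2) ^ n < eta / (2 * (c * th + 1))) by lra.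
      apply Rle_lt_trans with (((/2) ^ n) * (c * th + 1)). pose proof (pow_half_pos n). nra.
      apply Rmult_lt_compat_r with (r := c * th + 1) in H0; [|nra].
      replace (eta / (2 * (c * th + 1)) * (c * th + 1)) with (eta / 2) in H0 by (field; nra). auto. }
    assert (eta <= kabs (e (vsub E (zs n) x)) + kabs (res n h)).
    { unfold eta. rewrite Eq. eapply Rle_trans. apply kabs_tri. rewrite !kabs_opp. lra. }
    lra.
  - intros a Ca HCa HC0. apply Rnot_lt_le. intro Hgt.
    set (gap := sn a x - 2 * (Cf * c * Ca)).
    assert (Hgap : 0 < gap) by (unfold gap; lra).
    destruct (Hx (gap / (Ca + 1))) as [N HN]. apply Rdiv_lt_0_compat; lra.
    specialize (HN N (le_n N)). rewrite mulset_iff in HN by (apply Rdiv_lt_0_compat; lra).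
    specialize (HN a Ca HCa HC0).
    pose proof (sn_split a x (zs N)). rewrite vsub_sym_sn in H.
    pose proof (zs_bd a Ca N HCa HC0).
    assert (gap / (Ca + 1) * Ca < gap).
    { apply Rmult_lt_reg_r with (Ca + 1). lra. field_simplify; nra. }
    unfold gap in *. lra.
Qed.
End Iter.

Hypothesis HfG : FnuG F E TK nu G U f.

Lemma rep_unique y z1 z2 : rep y z1 -> rep y z2 -> z1 = z2.
Proof.
  intros H1 H2. apply vsub_eq0. destruct HG as [HGd [_ [_ [_ Hsep]]]]. apply Hsep.
  intros e He. destruct (HfG e He) as [h [Hh Hhf]].
  rewrite dual_sub by auto. rewrite (H1 e He h Hh Hhf), (H2 e He h Hh Hhf). ring.
Qed.

Definition u (y : (Om -> Kt) -> Kt) : car E := epsilon (inhabits vzero) (rep y).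

Lemma u_rep y : fdual F y -> rep y (u y).
Proof.
  intros Hy. destruct (fdual_bounded y Hy) as [c [Hc Hyc]].
  destruct (EL y c Hy Hc Hyc) as [z [Hz _]]. unfold u. apply epsilon_spec. eauto.
Qed.

Lemma u_bound y c a Ca : fdual F y -> 0 < c -> (forall g, Bn g -> kabs (y g) <= c) ->
  bnd a Ca -> 0 <= Ca -> sn a (u y) <= 2 * (Cf * c * Ca).
Proof.
  intros Hy Hc Hyc HCa HC0. destruct (EL y c Hy Hc Hyc) as [z [Hz Hb]].
  rewrite (rep_unique y (u y) z (u_rep y Hy) Hz). auto.
Qed.

Lemma u_eps : is_eps F E u.
Proof.
  split; [|split; [|split]].
  - intros y1 y2 H1 H2 Heq. apply (rep_unique y2). 2: apply u_rep; auto.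
    intros e He h Hh Hhf. rewrite (u_rep y1 H1 e He h Hh Hhf). apply Heq. destruct Hh; auto.
  - intros y1 y2 H1 H2. apply (rep_unique (fun g => kadd (y1 g) (y2 g))).
    apply u_rep, fdual_add; auto.
    intros e He h Hh Hhf. destruct HG as [HGd _]. destruct (HGd e He) as [Ea _].
    rewrite Ea, (u_rep y1 H1 e He h Hh Hhf), (u_rep y2 H2 e He h Hh Hhf). auto.
  - intros c0 y Hy. apply (rep_unique (fun g => kmul c0 (y g))).
    apply u_rep, fdual_scale; auto.
    intros e He h Hh Hhf. destruct HG as [HGd _]. destruct (HGd e He) as [_ [Es _]].
    rewrite Es, (u_rep y Hy e He h Hh Hhf). auto.
  - intros a. destruct (bnd_ex a) as [Ca [HC0 HCa]].
    exists Bn, (2 * Cf * Ca). split; [exact Hcpt|]. split; [exact Bn_absconv|].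
    intros y Hy c Hyc.
    assert (Hc0 : 0 <= c).
    { specialize (Hyc fzero Bn_0). rewrite lin_0, kabs_0 in Hyc; auto. apply fdual_lin; auto. }
    destruct Hc0 as [Hc|Hc].
    + pose proof (u_bound y c a Ca Hy Hc Hyc HCa HC0). nra.
    + subst c. rewrite Rmult_0_r. apply Rnot_lt_le. intro Hp.
      set (c' := sn a (u y) / (2 * Cf * Ca + 1)).
      assert (Hc' : 0 < c') by (unfold c'; apply Rdiv_lt_0_compat; nra).
      assert (Hyc' : forall g, Bn g -> kabs (y g) <= c') by (intros g Hg; specialize (Hyc g Hg); lra).
      pose proof (u_bound y c' a Ca Hy Hc' Hyc' HCa HC0).
      assert (2 * (Cf * c' * Ca) < sn a (u y)).
      { unfold c'. replace (2 * (Cf * (sn a (u y) / (2 * Cf * Ca + 1)) * Ca))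
          with (sn a (u y) * ((2 * Cf * Ca) / (2 * Cf * Ca + 1))) by (field; nra).
        assert ((2 * Cf * Ca) / (2 * Cf * Ca + 1) < 1).
        { apply Rmult_lt_reg_r with (2 * Cf * Ca + 1). nra. field_simplify; nra. }
        nra. }
      lra.
Qed.

Lemma u_bounded : Defs.bounded E (fun v => exists y, Bpolar F TK nu y /\ v = u y).
Proof.
  intros a. destruct (bnd_ex a) as [Ca [HC0 HCa]]. exists (2 * (Cf * 1 * Ca)).
  intros v [y [[Hy Hp] ->]]. apply u_bound; auto. lra.
Qed.

Lemma u_point x : U x -> u (fun g => TK g x) = f x.
Proof.
  intros Ux. apply (rep_unique (fun g => TK g x)). apply u_rep, HTKd.
  intros e He h Hh Hhf. rewrite Hhf; auto.
Qed.
End Ext.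

End Main.

Lemma zero_eps (k : KField) (E : LCHS (scal k)) (Om : Type) (F : FScal (scal k) Om) :
  is_eps F E (fun _ => vzero E).
Proof.
  split; [|split; [|split]].
  - intros; reflexivity.
  - intros. rewrite vadd_0. reflexivity.
  - intros. rewrite vscale_v0. reflexivity.
  - intros a. exists (fun _ => False), 0. split; [|split].
    + split. intros _ []. intros I O _ _. exists nil. intros _ [].
    + intros g1 g2 c d [].
    + intros. rewrite sn_0. lra.
Qed.

Theorem mainTheorem2 (k : KField) (E : LCHS (scal k)) (Om w : Type)
  (G : (car E -> Kt (scal k)) -> Prop)
  (F : FScal (scal k) Om) (FE : FVec E Om)
  (TK : (Om -> Kt (scal k)) -> (w -> Kt (scal k)))
  (TE : (Om -> car E) -> (w -> car E))
  (nu : w -> R) (U : w -> Prop) :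
  inhabited Om -> inhabited w ->
  locally_complete E ->
  separating_subspace E G ->
  (forall x : Om, fdual F (fun f => f x)) ->
  eps_into_compatible F E FE ->
  TK_linear F TK -> TE_linear E FE TE ->
  consistent F E FE TK TE ->
  strong F E FE TK TE ->
  (forall x, 0 < nu x) ->
  Fnu_Banach F TK nu ->
  fcompact F (Bnu F TK nu) ->
  fixes_topology F TK nu U ->
  forall f : w -> car E, FnuG F E TK nu G U f -> lb E nu U f ->
  exists Fn : Om -> car E, Feps_nu F E TK nu Fn /\ forall x, U x -> TE Fn x = f x.
Proof.
  intros _ _ HLC HG _ _ HTK _ Hcons _ Hnu HB Hcpt Hfix f HfG Hlb.
  destruct Hfix as [Cf [HCf HCfix]].
  assert (HTKd : forall x, fdual F (fun g => TK g x)).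
  { intros x. destruct (Hcons _ (zero_eps k E Om F)) as [_ H]. apply H. }
  pose (uu := u k E Om w G F TK nu U f).
  assert (Hue : is_eps F E uu) by (apply (u_eps k E Om w G F TK nu U HTK Hnu HB Hcpt HTKd Cf HCf HCfix f Hlb HLC HG HfG)).
  exists (Smap E uu). split.
  - exists uu. split; auto. split; auto.
    apply (u_bounded k E Om w G F TK nu U HTK Hnu HB Hcpt HTKd Cf HCf HCfix f Hlb HLC HG HfG).
  - intros x Ux. destruct (Hcons uu Hue) as [_ H]. destruct (H x) as [_ ->].
    apply (u_point k E Om w G F TK nu U HTK Hnu HB Hcpt HTKd Cf HCf HCfix f Hlb HLC HG HfG x Ux).
Qed.
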